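(* In the Karma DPG (with the pay-bid-to-society karma transition), the immediate reward $r[x,a](\mu,\pi)$ and the state transition probability $p[x^+\mid x,a](\mu,\pi)$ are Lipschitz continuous in $s=(\mu,\pi)$ on $\mathcal{M}\times\Pi$. That is, there exist constants $L_r,L_p>0$ such that for all $s,s'\in\mathcal{M}\times\Pi$, $$\sup_{x\in\mathcal{X},\,a\in\mathcal{A}[x]}|r[x,a](s)-r[x,a](s')|\le L_r\|s-s'\|,\qquad \sup_{x,x^+\in\mathcal{X},\,a\in\mathcal{A}[x]}|p[x^+\mid x,a](s)-p[x^+\mid x,a](s')|\le L_p\|s-s'\|.$$
   Context: Karma DPG. Let $\mathcal{U}\subset\mathbb{R}_{>0}$ be a finite set of urgency levels and $K\in\mathbb{N}$. The state space is $\mathcal{X}=\mathcal{U}\times\{0,\dots,K\}$, states written $x=(u,k)$. In state $(u,k)$ the action set is $\mathcal{A}[k]=\{0,1,\dots,k\}$ (bids). $\mathcal{M}=\Delta(\mathcal{X})$ is the set of probability distributions on $\mathcal{X}$ and $\Pi$ is the set of stationary policies $\pi$, i.e. $\pi[\cdot\mid x]\in\Delta(\mathcal{A}[x])$ for every $x$; $\mathcal{M}\times\Pi$ is viewed as a compact subset of a finite-dimensional real vector space equipped with a fixed norm $\|\cdot\|$ (e.g. the sup norm of the concatenated vector). Let $\phi[u^+\mid u]$ be a fixed Markov kernel on $\mathcal{U}$. For bids $a,a'$ let $\mathbb{P}[\texttt{win}\mid a,a']=1$ if $a>a'$, $0$ if $a<a'$, $1/2$ if $a=a'$. Define $\gamma[\texttt{win}\mid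 a](\mu,\pi)=\sum_{(u',k')\in\mathcal{X}}\sum_{a'\in\mathcal{A}[k']}\mu[u',k']\,\pi[a'\mid u',k']\,\mathbb{P}[\texttt{win}\mid a,a']$ and $\gamma[\texttt{lose}\mid a]=1-\gamma[\texttt{win}\mid a]$. Reward: $r[(u,k),a](\mu,\pi)=u\,\gamma[\texttt{win}\mid a](\mu,\pi)$. Pay-bid-to-society karma transition: let $\bar p(\mu,\pi)=\sum_{(u,k)}\mu[u,k]\sum_{a}\pi[a\mid u,k]\,\gamma[\texttt{win}\mid a](\mu,\pi)\,a$, $f^{\text{low}}=\lceil\bar p\rceil-\bar p$, $f^{\text{high}}=1-f^{\text{low}}$. Set $\kappa[k^+\mid k,a,\texttt{win}]=f^{\text{low}}\mathbf 1[k^+=k-a+\lfloor\bar p\rfloor]+f^{\text{high}}\mathbf 1[k^+=k-a+\lceil\bar p\rceil]$, $\kappa[k^+\mid k,a,\texttt{lose}]=f^{\text{low}}\mathbf 1[k^+=k+\lfloor\bar p\rfloor]+f^{\text{high}}\mathbf 1[k^+=k+\lceil\bar p\rceil]$, and $\kappa[k^+\mid k,a](\mu,\pi)=\sum_{o\in\{\texttt{win},\texttt{lose}\}}\gamma[o\mid a](\mu,\pi)\,\kappa[k^+\mid k,a,o](\mu,\pi)$. Transition: $p[(u^+,k^+)\mid (u,k),a](\mu,\pi)=\phi[u^+\mid u]\,\kappa[k^+\mid k,a](\mu,\pi)$. *)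

(* Defs.v *)
From mathcomp Require Import all_boot all_order all_algebra.
From mathcomp Require Import reals.
Set Implicit Arguments. Unset Strict Implicit. Unset Printing Implicit Defensive.
Import Order.TTheory GRing.Theory Num.Theory.
Local Open Scope ring_scope.

Section KarmaDPG.
Variables (R : realType) (U : finType) (K : nat).

(* state x = (u, k), k in {0,...,K} *)
Definition state := (U * 'I_K.+1)%type.

Definition is_dist (mu : state -> R) : Prop :=
  (forall x, 0 <= mu x) /\ \sum_x mu x = 1.

(* stationary policies: pi x a = pi[a | x]; bids a : 'I_K.+1 with a <= k
   form A[k] = {0,...,k}; entries outside A[k] are forced to be 0 *)
Definition is_policy (pi : state -> 'I_K.+1 -> R) : Prop :=
  forall x : state, (forall a, 0 <= pi x a) /\ (forall a : 'I_K.+1, (x.2 < a)%N -> pi x a = 0)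
            /\ \sum_(a < K.+1 | (a <= x.2)%N) pi x a = 1.

Definition sdist (mu : state -> R) (pi : state -> 'I_K.+1 -> R)
                 (mu' : state -> R) (pi' : state -> 'I_K.+1 -> R) : R :=
  Num.max (\big[Num.max/0]_x `|mu x - mu' x|)
          (\big[Num.max/0]_(x : state) \big[Num.max/0]_(a < K.+1 | (a <= x.2)%N) `|pi x a - pi' x a|).

Definition winP (a a' : nat) : R :=
  if (a' < a)%N then 1 else if (a < a')%N then 0 else 2^-1.

Definition gamma_win (mu : state -> R) (pi : state -> 'I_K.+1 -> R) (a : nat) : R :=
  \sum_(x' : state) \sum_(a' < K.+1 | (a' <= x'.2)%N) mu x' * pi x' a' * winP a a'.

Definition gamma_lose mu pi a : R := 1 - gamma_win mu pi a.

Definition reward (urg : U -> R) mu pi (x : state) (a : nat) : R :=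
  urg x.1 * gamma_win mu pi a.

Definition pbar (mu : state -> R) (pi : state -> 'I_K.+1 -> R) : R :=
  \sum_(x : state) mu x * \sum_(a < K.+1 | (a <= x.2)%N) pi x a * gamma_win mu pi a * (a : nat)%:R.

Definition f_low mu pi : R := (Num.ceil (pbar mu pi))%:~R - pbar mu pi.
Definition f_high mu pi : R := 1 - f_low mu pi.

Definition kappa_win mu pi (kp k a : nat) : R :=
  f_low mu pi * (kp%:Z == k%:Z - a%:Z + Num.floor (pbar mu pi))%:R
  + f_high mu pi * (kp%:Z == k%:Z - a%:Z + Num.ceil (pbar mu pi))%:R.

Definition kappa_lose mu pi (kp k : nat) : R :=
  f_low mu pi * (kp%:Z == k%:Z + Num.floor (pbar mu pi))%:R
  + f_high mu pi * (kp%:Z == k%:Z + Num.ceil (pbar mu pi))%:R.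

Definition kappa mu pi (kp k a : nat) : R :=
  gamma_win mu pi a * kappa_win mu pi kp k a + gamma_lose mu pi a * kappa_lose mu pi kp k.

(* p[(u+,k+) | (u,k), a](mu,pi) = phi[u+|u] kappa[k+|k,a](mu,pi); phi u u+ = phi[u+|u] *)
Definition trans (phi : U -> U -> R) mu pi (xp x : state) (a : nat) : R :=
  phi x.1 xp.1 * kappa mu pi xp.2 x.2 a.

End KarmaDPG.

(* Main.v *)
Require Import Defs.
From mathcomp Require Import all_boot all_order all_algebra.
From mathcomp Require Import reals.
From mathcomp Require Import zify ring lra.
Import Order.TTheory GRing.Theory Num.Theory.
Local Open Scope ring_scope.

Section S.
Variables (R : realType) (U : finType) (K : nat).

Lemma bigmax_ge0 (I : finType) (P : pred I) (F : I -> R) :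
  0 <= \big[Num.max/0]_(i | P i) F i.
Proof. by elim/big_rec: _ => // j x _ Hx; rewrite le_max Hx orbT. Qed.

Lemma bigmax_ge (I : finType) (P : pred I) (F : I -> R) i :
  P i -> F i <= \big[Num.max/0]_(j | P j) F j.
Proof.
move=> Pi; rewrite unlock /reducebig.
have : i \in index_enum I by rewrite mem_index_enum.
elim: (index_enum I) => //= j r IH; rewrite in_cons => /orP[/eqP<-|ir].
  by rewrite Pi le_max lexx.
case: (P j); last exact: IH.
by rewrite le_max IH ?orbT.
Qed.

Definition hat (t : R) := Num.max 0 (1 - `|t|).

Lemma max0_lip (u v : R) : `|Num.max 0 u - Num.max 0 v| <= `|u - v|.
Proof.
rewrite !maxEle; case: ifP => h1; case: ifP => h2.
- by [].
- move/negbT: h2; rewrite -ltNge => h2.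
  rewrite subr0 ger0_norm //; have := ler_norm (u - v); lra.
- move/negbT: h1; rewrite -ltNge => h1.
  rewrite sub0r normrN ger0_norm //; have := ler_norm (v - u); rewrite distrC; lra.
- by rewrite subrr normr0.
Qed.

Lemma hat_lip s t : `|hat s - hat t| <= `|s - t|.
Proof.
apply: le_trans (max0_lip _ _) _.
have -> : 1 - `|s| - (1 - `|t|) = `|t| - `|s| by ring.
by rewrite (distrC s); apply: ler_dist_dist.
Qed.

Lemma hat0 t : 1 <= t \/ t <= -1 -> hat t = 0.
Proof.
move=> H; rewrite /hat maxEle; case: ifP => // h.
case: H => H; first by move: h; rewrite ger0_norm; lra.
by move: h; rewrite ler0_norm; lra.
Qed.

Lemma hatP t : 0 <= t <= 1 -> hat t = 1 - t.
Proof. by move=> /andP[H1 H2]; rewrite /hat maxEle ger0_norm // ifT //; lra. Qed.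

Lemma hatN t : -1 <= t <= 0 -> hat t = 1 + t.
Proof. by move=> /andP[H1 H2]; rewrite /hat maxEle ler0_norm // opprK ifT //; lra. Qed.

Lemma kappa_hat (p : R) (m : int) :
  ((Num.ceil p)%:~R - p) * (m == Num.floor p)%:R
  + (1 - ((Num.ceil p)%:~R - p)) * (m == Num.ceil p)%:R = hat (m%:~R - p).
Proof.
have /andP[Hn1 Hn2] := floor_itv p.
have Hc : forall x y : int, (x <= y)%R -> x%:~R <= y%:~R :> R by move=> ??; rewrite ler_int.
rewrite ceil_floor; set n := Num.floor p in Hn1 Hn2 *.
rewrite intrD in Hn2.
have I1 : ((1%Z)%:~R : R) = 1 by [].
rewrite I1 in Hn2.
case b: (p \isn't a Num.int_num).
- have pn : p != n%:~R.
    apply/eqP => E; move: b; rewrite E; by rewrite intr_int.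
  have Hn1' : n%:~R < p by rewrite lt_neqAle Hn1 eq_sym pn.
  rewrite /= intrD.
  case: (ltgtP m n) => [mn|nm|->].
  + have H1 := Hc (m + 1) n ltac:(lia); rewrite intrD in H1.
    have -> : (m == n + 1) = false by apply/negbTE/eqP; lia.
    rewrite ?I1 in H1 Hn2 *.
    rewrite hat0; [by rewrite !mulr0 addr0 | right; lra].
  + case E: (m == n + 1).
    * move/eqP: E => ->.
      rewrite intrD ?I1 hatP; first by rewrite mulr0 add0r mulr1.
      apply/andP; split; lra.
    * have H2 := Hc (n + 1 + 1) m ltac:(move/eqP: E; lia); rewrite !intrD in H2.
      rewrite ?I1 in H2 *.
      rewrite hat0; [by rewrite !mulr0 addr0 | left; lra].
  + have -> : (n == n + 1) = false by apply/negbTE/eqP; lia.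
    rewrite ?I1 hatN; first by rewrite mulr1 mulr0 addr0; ring.
    apply/andP; split; lra.
- have E : p = n%:~R by move/negbFE: b => /floorK.
  rewrite /= addr0 -E subrr subr0 mul0r add0r mul1r.
  case: (ltgtP m n) => [mn|nm|->].
  + have H1 := Hc (m + 1) n ltac:(lia); rewrite intrD ?I1 in H1.
    rewrite hat0 //; right; lra.
  + have H1 := Hc (n + 1) m ltac:(lia); rewrite intrD ?I1 in H1.
    rewrite hat0 //; left; lra.
  + by rewrite E subrr hatP ?lexx ?ler01 ?subr0.
Qed.


Definition FT := (state U K -> R) -> (state U K -> 'I_K.+1 -> R) -> R.

Definition LB (F : FT) (L B : R) :=
  0 <= L /\ 0 <= B /\
  (forall mu pi, is_dist mu -> is_policy pi -> `|F mu pi| <= B) /\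
  (forall mu pi mu' pi', is_dist mu -> is_policy pi -> is_dist mu' -> is_policy pi' ->
     `|F mu pi - F mu' pi'| <= L * sdist mu pi mu' pi').

Definition Lip (F : FT) := exists L B, LB F L B.

Lemma sdist_ge0 (mu mu' : state U K -> R) (pi pi' : state U K -> 'I_K.+1 -> R) : 0 <= sdist mu pi mu' pi'.
Proof. by rewrite /sdist le_max bigmax_ge0. Qed.

Lemma LB_mono F L B L' B' : LB F L B -> L <= L' -> B <= B' -> LB F L' B'.
Proof.
move=> [h1 [h2 [h3 h4]]] hL hB; split; first exact: le_trans hL.
split; first exact: le_trans hB.
split=> [mu pi ? ?|mu pi mu' pi' ? ? ? ?]; first exact: le_trans (h3 _ _ _ _) hB.
apply: le_trans (h4 _ _ _ _ _ _ _ _) _ => //.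
by apply: ler_wpM2r => //; exact: sdist_ge0.
Qed.

Lemma Lip_ext (F G : FT) : (forall mu pi, F mu pi = G mu pi) -> Lip F -> Lip G.
Proof.
move=> e [L [B [h1 [h2 [h3 h4]]]]]; exists L, B; do 3 (split=> //).
  by move=> mu pi; rewrite -e; apply: h3.
by move=> mu pi mu' pi'; rewrite -!e; apply: h4.
Qed.

Lemma Lip_const c : Lip (fun _ _ => c).
Proof.
exists 0, `|c|; do 3 (split=> //).
by move=> *; rewrite subrr normr0 mul0r.
Qed.

Lemma le_sum_nonneg (I : finType) (G : I -> R) i :
  (forall j, 0 <= G j) -> G i <= \sum_j G j.
Proof.
move=> h; rewrite (bigD1 i) //=; apply: ler_wpDr; first exact: sumr_ge0.
exact: lexx.
Qed.

Lemma Lip_mu x : Lip (fun mu _ => mu x).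
Proof.
exists 1, 1; split=> //; split=> //; split.
  move=> mu pi [h1 h2] _; rewrite ger0_norm // -h2.
  exact: le_sum_nonneg.
move=> mu pi mu' pi' *; rewrite mul1r /sdist le_max; apply/orP; left.
exact: (bigmax_ge _ (fun _ => true) (fun x => `|mu x - mu' x|) x isT).
Qed.

Lemma Lip_pi x a : Lip (fun _ pi => pi x a).
Proof.
exists 1, 1; split=> //; split=> //; split.
  move=> mu pi _ hp; have [h1 [h2 h3]] := hp x.
  rewrite ger0_norm //; case: (leqP a x.2) => ha; last by rewrite h2.
  rewrite -h3 (bigD1 a) //=; apply: ler_wpDr; first exact: sumr_ge0.
  exact: lexx.
move=> mu pi mu' pi' _ hp _ hp'; rewrite mul1r.
case: (leqP a x.2) => ha; last first.
  have [_ [h2 _]] := hp x; have [_ [h2' _]] := hp' x.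
  by rewrite h2 // h2' // subrr normr0 sdist_ge0.
rewrite /sdist le_max; apply/orP; right.
apply: le_trans (bigmax_ge _ (fun _ => true)
  (fun x : state U K => \big[Num.max/0]_(a < K.+1 | (a <= x.2)%N) `|pi x a - pi' x a|) x isT).
exact: (bigmax_ge _ (fun a : 'I_K.+1 => (a <= x.2)%N) (fun a => `|pi x a - pi' x a|) a ha).
Qed.

Lemma Lip_add F G : Lip F -> Lip G -> Lip (fun mu pi => F mu pi + G mu pi).
Proof.
move=> [L1 [B1 [a1 [b1 [c1 d1]]]]] [L2 [B2 [a2 [b2 [c2 d2]]]]].
exists (L1 + L2), (B1 + B2); split; first exact: addr_ge0.
split; first exact: addr_ge0.
split=> [mu pi ? ?|mu pi mu' pi' ? ? ? ?].
  by apply: le_trans (ler_normD _ _) _; apply: lerD; [apply: c1|apply: c2].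
have -> : F mu pi + G mu pi - (F mu' pi' + G mu' pi') =
  (F mu pi - F mu' pi') + (G mu pi - G mu' pi') by ring.
apply: le_trans (ler_normD _ _) _; rewrite mulrDl.
by apply: lerD; [apply: d1|apply: d2].
Qed.

Lemma Lip_sub F G : Lip F -> Lip G -> Lip (fun mu pi => F mu pi - G mu pi).
Proof.
move=> [L1 [B1 [a1 [b1 [c1 d1]]]]] [L2 [B2 [a2 [b2 [c2 d2]]]]].
exists (L1 + L2), (B1 + B2); split; first exact: addr_ge0.
split; first exact: addr_ge0.
split=> [mu pi ? ?|mu pi mu' pi' ? ? ? ?].
  by apply: le_trans (ler_normB _ _) _; apply: lerD; [apply: c1|apply: c2].
have -> : F mu pi - G mu pi - (F mu' pi' - G mu' pi') =
  (F mu pi - F mu' pi') - (G mu pi - G mu' pi') by ring.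
apply: le_trans (ler_normB _ _) _; rewrite mulrDl.
by apply: lerD; [apply: d1|apply: d2].
Qed.

Lemma Lip_mul F G : Lip F -> Lip G -> Lip (fun mu pi => F mu pi * G mu pi).
Proof.
move=> [L1 [B1 [a1 [b1 [c1 d1]]]]] [L2 [B2 [a2 [b2 [c2 d2]]]]].
exists (L1 * B2 + B1 * L2), (B1 * B2); split.
  by apply: addr_ge0; apply: mulr_ge0.
split; first exact: mulr_ge0.
split=> [mu pi ? ?|mu pi mu' pi' ? ? ? ?].
  by rewrite normrM; apply: ler_pM => //; [apply: c1|apply: c2].
have -> : F mu pi * G mu pi - F mu' pi' * G mu' pi' =
  (F mu pi - F mu' pi') * G mu pi + F mu' pi' * (G mu pi - G mu' pi') by ring.
apply: le_trans (ler_normD _ _) _; rewrite !normrM.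
have -> : (L1 * B2 + B1 * L2) * sdist mu pi mu' pi' =
  L1 * sdist mu pi mu' pi' * B2 + B1 * (L2 * sdist mu pi mu' pi') by ring.
by apply: lerD; apply: ler_pM => //; [apply: d1|apply: c2|apply: c1|apply: d2].
Qed.

Lemma Lip_uniform (I : finType) (F : I -> FT) :
  (forall i, Lip (F i)) -> exists L B, 0 <= L /\ 0 <= B /\ forall i, LB (F i) L B.
Proof.
move=> H.
have /fin_all_exists [fL hL] := H.
have /fin_all_exists [fB hB] := hL.
exists (\sum_i fL i), (\sum_i fB i).
split; first by apply: sumr_ge0 => j _; case: (hB j) => [? [? _]].
split; first by apply: sumr_ge0 => j _; case: (hB j) => [? [? _]].
move=> i; apply: LB_mono (hB i) _ _; apply: le_sum_nonneg => j; by case: (hB j) => [? [? _]].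
Qed.

Lemma Lip_sum (I : finType) (P : pred I) (F : I -> FT) :
  (forall i, Lip (F i)) -> Lip (fun mu pi => \sum_(i | P i) F i mu pi).
Proof.
move=> /Lip_uniform [L [B [hL [hB H]]]].
exists (\sum_(i | P i) L), (\sum_(i | P i) B); split; first exact: sumr_ge0.
split; first exact: sumr_ge0.
split=> [mu pi ? ?|mu pi mu' pi' ? ? ? ?].
  apply: le_trans (ler_norm_sum _ _ _) _; apply: ler_sum => i _.
  by case: (H i) => [_ [_ [h _]]]; apply: h.
rewrite -sumrB; apply: le_trans (ler_norm_sum _ _ _) _; rewrite mulr_suml.
apply: ler_sum => i _; by case: (H i) => [_ [_ [_ h]]]; apply: h.
Qed.

Lemma Lip_hat (m : R) F : Lip F -> Lip (fun mu pi => hat (m - F mu pi)).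
Proof.
move=> [L [B [a1 [b1 [c1 d1]]]]]; exists L, 1; split=> //; split=> //; split.
  move=> *; rewrite /hat ger0_norm ?le_max ?lexx // ge_max ler01 /=.
  by rewrite lerBlDr lerDl.
move=> mu pi mu' pi' *; apply: le_trans (hat_lip _ _) _.
have -> : m - F mu pi - (m - F mu' pi') = - (F mu pi - F mu' pi') by ring.
by rewrite normrN; apply: d1.
Qed.


Lemma Lip_gamma (a : nat) : Lip (fun mu pi => gamma_win mu pi a).
Proof.
rewrite /gamma_win; apply: Lip_sum => x; apply: Lip_sum => a'.
apply: Lip_mul; last exact: Lip_const.
apply: Lip_mul; [exact: Lip_mu | exact: Lip_pi].
Qed.

Lemma Lip_pbar : Lip (fun mu pi => pbar mu pi).
Proof.
rewrite /pbar; apply: Lip_sum => x; apply: Lip_mul; first exact: Lip_mu.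
apply: Lip_sum => a; apply: Lip_mul; last exact: Lip_const.
apply: Lip_mul; [exact: Lip_pi | exact: Lip_gamma].
Qed.

Lemma kappa_winE (mu : state U K -> R) (pi : state U K -> 'I_K.+1 -> R) (kp k a : nat) :
  kappa_win mu pi kp k a = hat ((kp%:Z - k%:Z + a%:Z)%:~R - pbar mu pi).
Proof.
rewrite /kappa_win /f_high /f_low -kappa_hat.
have -> : (kp%:Z == k%:Z - a%:Z + Num.floor (pbar mu pi)) =
          (kp%:Z - k%:Z + a%:Z == Num.floor (pbar mu pi)).
  by apply/idP/idP => /eqP H; apply/eqP; lia.
have -> : (kp%:Z == k%:Z - a%:Z + Num.ceil (pbar mu pi)) =
          (kp%:Z - k%:Z + a%:Z == Num.ceil (pbar mu pi)).
  by apply/idP/idP => /eqP H; apply/eqP; lia.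
by [].
Qed.

Lemma kappa_loseE (mu : state U K -> R) (pi : state U K -> 'I_K.+1 -> R) (kp k : nat) :
  kappa_lose mu pi kp k = hat ((kp%:Z - k%:Z)%:~R - pbar mu pi).
Proof.
rewrite /kappa_lose /f_high /f_low -kappa_hat.
have -> : (kp%:Z == k%:Z + Num.floor (pbar mu pi)) =
          (kp%:Z - k%:Z == Num.floor (pbar mu pi)).
  by apply/idP/idP => /eqP H; apply/eqP; lia.
have -> : (kp%:Z == k%:Z + Num.ceil (pbar mu pi)) =
          (kp%:Z - k%:Z == Num.ceil (pbar mu pi)).
  by apply/idP/idP => /eqP H; apply/eqP; lia.
by [].
Qed.

Lemma Lip_kappa (kp k a : nat) : Lip (fun mu pi => kappa mu pi kp k a).
Proof.
apply: (Lip_ext (fun mu pi => gamma_win mu pi a * hat ((kp%:Z - k%:Z + a%:Z)%:~R - pbar mu pi)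
    + (1 - gamma_win mu pi a) * hat ((kp%:Z - k%:Z)%:~R - pbar mu pi))).
  by move=> mu pi; rewrite /kappa kappa_winE kappa_loseE.
apply: Lip_add; apply: Lip_mul.
- exact: Lip_gamma.
- exact: Lip_hat Lip_pbar.
- apply: Lip_sub; [exact: Lip_const | exact: Lip_gamma].
- exact: Lip_hat Lip_pbar.
Qed.

End S.

Theorem lemma1 (R : realType) (U : finType) (urg : U -> R)
  (urg_inj : injective urg) (urg_pos : forall u, 0 < urg u)
  (K : nat) (phi : U -> U -> R)
  (phi_ge0 : forall u v, 0 <= phi u v) (phi_sum1 : forall u, \sum_v phi u v = 1) :
  exists Lr Lp : R, 0 < Lr /\ 0 < Lp /\
    forall (mu mu' : state U K -> R) (pi pi' : state U K -> 'I_K.+1 -> R),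
      is_dist mu -> is_policy pi -> is_dist mu' -> is_policy pi' ->
      (forall (x : state U K) (a : 'I_K.+1), (a <= x.2)%N ->
         `|reward urg mu pi x a - reward urg mu' pi' x a| <= Lr * sdist mu pi mu' pi')
      /\
      (forall (x xp : state U K) (a : 'I_K.+1), (a <= x.2)%N ->
         `|trans phi mu pi xp x a - trans phi mu' pi' xp x a| <= Lp * sdist mu pi mu' pi').
Proof.
have [Lr [Br [hLr [_ Hr]]]] := @Lip_uniform R U K _
  (fun i : state U K * 'I_K.+1 => fun mu pi => reward urg mu pi i.1 i.2)
  (fun i => ltac:(apply: Lip_mul; [apply: Lip_const | apply: Lip_gamma])).
have [Lp [Bp [hLp [_ Hp]]]] := @Lip_uniform R U K _
  (fun i : state U K * state U K * 'I_K.+1 => fun mu pi => trans phi mu pi i.1.2 i.1.1 i.2)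
  (fun i => ltac:(apply: Lip_mul; [apply: Lip_const | apply: Lip_kappa])).
exists (Lr + 1), (Lp + 1); split; first lra.
split; first lra.
move=> mu mu' pi pi' h1 h2 h3 h4; split.
- move=> x a _; have [_ [_ [_ H]]] := Hr (x, a).
  apply: le_trans (H _ _ _ _ h1 h2 h3 h4) _.
  by apply: ler_wpM2r; [exact: sdist_ge0 | lra].
- move=> x xp a _; have [_ [_ [_ H]]] := Hp (x, xp, a).
  apply: le_trans (H _ _ _ _ h1 h2 h3 h4) _.
  by apply: ler_wpM2r; [exact: sdist_ge0 | lra].
Qed.
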